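(* Let $q=2v+1$ be a prime power with $v$ odd. The maximum number of pairwise inequivalent $(\mathbb F_q^\Box,3)$ Heffter rulers equals the maximum $n$ for which there exists an $(\mathbb F_q^\Box,3;n)$ Heffter difference packing.
   Context: $\mathbb F_q^\Box$ denotes the multiplicative group of nonzero squares of $\mathbb F_q$. Fix a group isomorphism $\phi:\mathbb F_q^\Box\to\mathbb Z_v$. An $(\mathbb F_q^\Box,k;n)$ Heffter difference packing is a family of $n$ $k$-subsets $B_1,\dots,B_n$ of $\mathbb F_q^\Box$ such that: the multiset of all differences $a-b$, with $(a,b)$ an ordered pair of distinct elements of a common $\phi(B_i)$, over all $i$, has no repeated element of $\mathbb Z_v$; $k$ divides $v$ and the elements of each $\phi(B_i)$ are pairwise distinct modulo $k$; each $B_i$ sums to $0$ in $\mathbb F_q$. An $(\mathbb F_q^\Box,k)$ Heffter ruler is a $k$-subset $B$ such that $\{B\}$ is an $(\mathbb F_q^\Box,k;1)$ Heffter difference packing. Two Heffter rulers $A,B$ are equivalent if $At=B$ for some nonzero $t\in\mathbb F_q$, where $At=\{at:a\in A\}$. *)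

(* Defs.v *)
From HB Require Import structures.
From mathcomp Require Import all_boot all_order all_algebra all_field.
Set Implicit Arguments. Unset Strict Implicit. Unset Printing Implicit Defensive.
Import GRing.Theory.
Local Open Scope ring_scope.

Section Heffter.
Variable F : finFieldType.

Definition nzsquares : {set F} :=
  [set x : F | (x != 0) && [exists y : F, y ^+ 2 == x]].

(* phi : F -> nat models the group isomorphism F_q^Box -> Z_v, with
   Z_v = {0,..,v-1} under addition mod v. Only its values on squares matter. *)
Definition sq_iso (v : nat) (phi : F -> nat) : Prop :=
  [/\ {in nzsquares, forall x, (phi x < v)%N},
      {in nzsquares &, injective phi},
      (forall m : nat, (m < v)%N -> exists2 x, x \in nzsquares & phi x = m)
    & {in nzsquares &, forall x y, phi (x * y) = ((phi x + phi y) %% v)%N}].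

Definition zdiff (v a b : nat) : nat := ((a + (v - b)) %% v)%N.

Definition is_HDP (v : nat) (phi : F -> nat) (k n : nat) (B : 'I_n -> {set F}) : bool :=
  [&& (k %| v)%N,
      [forall i, (B i \subset nzsquares) && (#|B i| == k)],
      [forall i, \sum_(x in B i) x == 0],
      [forall i, [forall a in B i, [forall b in B i,
          (a != b) ==> ((phi a %% k)%N != (phi b %% k)%N)]]]
    & [forall i, [forall j, [forall a, [forall b, [forall c, [forall d,
          [&& a \in B i, b \in B i, a != b, c \in B j, d \in B j, c != d
            & zdiff v (phi a) (phi b) == zdiff v (phi c) (phi d)]
          ==> [&& i == j, a == c & b == d]]]]]]]].

Definition has_HDP (v : nat) (phi : F -> nat) (k n : nat) : bool :=
  [exists B : {ffun 'I_n -> {set F}}, is_HDP v phi k B].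

Definition is_ruler (v : nat) (phi : F -> nat) (k : nat) (B : {set F}) : bool :=
  is_HDP v phi k (fun _ : 'I_1 => B).

Definition ruler_equiv (A B : {set F}) : bool :=
  [exists t : F, (t != 0) && (B == [set a * t | a in A])].

Definition has_inequiv_rulers (v : nat) (phi : F -> nat) (k n : nat) : bool :=
  [exists R : {ffun 'I_n -> {set F}},
     [forall i, is_ruler v phi k (R i)] &&
     [forall i, [forall j, (i != j) ==> ~~ ruler_equiv (R i) (R j)]]].

(* Maxima. Both families consist of pairwise distinct subsets of F, so
   n <= 2^#|F| always; the bound below is thus no restriction.
   Convention: the maximum of an empty set is 0. *)
Definition max_inequiv_rulers (v : nat) (phi : F -> nat) (k : nat) : nat :=
  \max_(n < (2 ^ #|F|).+1 | has_inequiv_rulers v phi k n) n.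

Definition max_HDP (v : nat) (phi : F -> nat) (k : nat) : nat :=
  \max_(n < (2 ^ #|F|).+1 | has_HDP v phi k n) n.

End Heffter.

(* Main.v *)
Require Import Defs.
From mathcomp Require Import all_boot all_order all_algebra all_field.
From mathcomp Require Import zify.
Set Implicit Arguments. Unset Strict Implicit. Unset Printing Implicit Defensive.
Import GRing.Theory.
Local Open Scope ring_scope.

Lemma sqM (F : finFieldType) (x y : F) :
  x \in nzsquares F -> y \in nzsquares F -> x * y \in nzsquares F.
Proof.
rewrite !inE => /andP[x0 /existsP[a /eqP ha]] /andP[y0 /existsP[b /eqP hb]].
rewrite mulf_neq0 //=; apply/existsP; exists (a*b); by rewrite exprMn ha hb.
Qed.

Lemma sqV (F : finFieldType) (x : F) :
  x \in nzsquares F -> x^-1 \in nzsquares F.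
Proof.
rewrite !inE => /andP[x0 /existsP[a /eqP ha]].
rewrite invr_eq0 x0 /=; apply/existsP; exists a^-1; by rewrite exprVn ha.
Qed.

Lemma zdiffK v x y : (y <= v)%N -> (zdiff v x y + y = x %[mod v])%N.
Proof. by move=> hy; rewrite /zdiff modnDml -addnA subnK // modnDr. Qed.

Lemma zdiff_eqE v x y x' y' : (0 < v)%N -> (y <= v)%N -> (y' <= v)%N ->
  (zdiff v x y == zdiff v x' y') = (x + y' == x' + y %[mod v])%N.
Proof.
move=> v0 hy hy'.
rewrite -(@modn_small (zdiff v x y) v) ?ltn_pmod // -(@modn_small (zdiff v x' y') v) ?ltn_pmod //.
rewrite -(eqn_modDr (y + y')).
rewrite addnA -modnDml zdiffK // modnDml.
idtac.
have -> : ((zdiff v x' y' + (y + y')) %% v = (x' + y) %% v)%N.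
  by rewrite [(y + y')%N]addnC addnA -modnDml zdiffK // modnDml.
by [].
Qed.

Lemma three_elt (F : finFieldType) (S : {set F}) (c d : F) :
  #|S| = 3%N -> \sum_(x in S) x = 0 -> c \in S -> d \in S -> c != d ->
  S = [set c; d; -(c+d)].
Proof.
move=> hS hsum cS dS cd.
have : #|S :\ c :\ d| == 1%N.
  have h1 := cardsD1 c S; have h2 := cardsD1 d (S :\ c).
  rewrite cS in h1; rewrite !inE eq_sym cd dS /= in h2.
  apply/eqP; move: h1 h2; rewrite hS /=; lia.
case/cards1P => e he.
have eS : e \in S :\ c :\ d by rewrite he set11.
move: (eS); rewrite !inE => /and3P[ed ec _].
have HS : S = [set c; d; e].
  apply/setP => x; move: (he) => /setP /(_ x); rewrite !inE.
  case: (eqVneq x c) => [->|xc]; first by rewrite cS.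
  case: (eqVneq x d) => [->|xd]; first by rewrite dS.
  by move=> /= ->.
move: hsum; rewrite HS -setUA big_setU1 /=; last by rewrite !inE negb_or cd eq_sym.
rewrite big_setU1 /=; last by rewrite !inE eq_sym.
rewrite big_set1 addrA => /eqP; rewrite addrC addr_eq0 => /eqP ->.
by rewrite setUA.
Qed.

Lemma hdp_to_rulers (F : finFieldType) (v : nat) (phi : F -> nat) n
  (B : {ffun 'I_n -> {set F}}) : (0 < v)%N -> sq_iso v phi ->
  is_HDP v phi 3 B ->
  [forall i, is_ruler v phi 3 (B i)] &&
  [forall i, [forall j, (i != j) ==> ~~ ruler_equiv (B i) (B j)]].
Proof.
move=> v0 [hlt hinj _ hmul] /and5P[h3 hsub hsum hres hcross].
apply/andP; split.
  apply/forallP => i; rewrite /is_ruler /is_HDP h3 /=.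
  apply/and4P; split; try apply/forallP => _.
  - exact: (forallP hsub i).
  - exact: (forallP hsum i).
  - exact: (forallP hres i).
  apply/forallP => i1; apply/forallP => j1; apply/forallP => a; apply/forallP => b.
  apply/forallP => c; apply/forallP => d; apply/implyP => H.
  move: hcross => /forallP/(_ i)/forallP/(_ i)/forallP/(_ a)/forallP/(_ b).
  move=> /forallP/(_ c)/forallP/(_ d)/implyP/(_ H)/and3P[_ -> ->].
  by rewrite (ord1 i1) (ord1 j1).
apply/forallP => i; apply/forallP => j; apply/implyP => ij.
apply/negP => /existsP[t /andP[t0 /eqP hj]].
have /andP[sub3 /eqP c3] := forallP hsub i.
have sqi : {subset B i <= nzsquares F} by apply/subsetP.
have /andP[subj _] := forallP hsub j.
have sqj : {subset B j <= nzsquares F} by apply/subsetP.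
have : (1 < #|B i|)%N by rewrite c3.
case/card_gt1P => a [b [ai bi ab]].
have atj : a * t \in B j by rewrite hj; apply: imset_f.
have btj : b * t \in B j by rewrite hj; apply: imset_f.
have tsq : t \in nzsquares F.
  have -> : t = (a * t) * a^-1.
    have a0 : a != 0 by move: (sqi a ai); rewrite inE => /andP[].
    by rewrite mulrC mulrA mulVf // mul1r.
  by apply: sqM; [apply: sqj | apply: sqV; apply: sqi].
have hat := hmul a t (sqi a ai) tsq.
have hbt := hmul b t (sqi b bi) tsq.
move: hcross => /forallP/(_ i)/forallP/(_ j)/forallP/(_ a)/forallP/(_ b).
move=> /forallP/(_ (a * t))/forallP/(_ (b * t))/implyP.
rewrite ai bi ab atj btj.
have abt : a * t != b * t by rewrite (inj_eq (mulIf t0)).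
rewrite abt /=.
rewrite zdiff_eqE //; last by apply: ltnW; apply: hlt; apply: sqj.
  2: by apply: ltnW; apply: hlt; apply: sqi.
rewrite hat hbt modnDmr modnDml addnA addnAC eqxx => /(_ isT) /and3P[/eqP ij' _ _].
by rewrite ij' eqxx in ij.
Qed.

Lemma rulers_to_hdp (F : finFieldType) (v : nat) (phi : F -> nat) n
  (R : {ffun 'I_n.+1 -> {set F}}) : (0 < v)%N -> sq_iso v phi ->
  [forall i, is_ruler v phi 3 (R i)] ->
  [forall i, [forall j, (i != j) ==> ~~ ruler_equiv (R i) (R j)]] ->
  is_HDP v phi 3 R.
Proof.
move=> v0 [hlt hinj _ hmul] hr hneq.
have h3 : (3 %| v)%N by have /and5P[] := forallP hr ord0.
rewrite /is_HDP h3 /=.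
apply/and4P; split.
- by apply/forallP => i; have /and5P[_ /forallP/(_ ord0) ] := forallP hr i.
- by apply/forallP => i; have /and5P[_ _ /forallP/(_ ord0) ] := forallP hr i.
- by apply/forallP => i; have /and5P[_ _ _ /forallP/(_ ord0) ] := forallP hr i.
apply/forallP => i; apply/forallP => j; apply/forallP => a; apply/forallP => b.
apply/forallP => c; apply/forallP => d; apply/implyP => H.
case: (eqVneq i j) H => [<-|ij] H.
  have /and5P[_ _ _ _ hc] := forallP hr i.
  move: H; rewrite /=.
  move: hc => /forallP/(_ ord0)/forallP/(_ ord0)/forallP/(_ a)/forallP/(_ b).
  by move=> /forallP/(_ c)/forallP/(_ d)/implyP hc /hc /and3P[_ -> ->].
exfalso.
move: H => /andP[ai /andP[bi /andP[ab /andP[cj /andP[dj /andP[cd hz]]]]]].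
have /and5P[_ /forallP/(_ ord0)/andP[subi /eqP ci] /forallP/(_ ord0)/eqP si _ _] := forallP hr i.
have /and5P[_ /forallP/(_ ord0)/andP[subj /eqP cj3] /forallP/(_ ord0)/eqP sj _ _] := forallP hr j.
have sqi : {subset R i <= nzsquares F} by apply/subsetP.
have sqj : {subset R j <= nzsquares F} by apply/subsetP.
have c0 : c != 0 by move: (sqj c cj); rewrite inE => /andP[].
have a0 : a != 0 by move: (sqi a ai); rewrite inE => /andP[].
set t := a / c.
have tsq : t \in nzsquares F by apply: sqM; [apply: sqi | apply: sqV; apply: sqj].
have t0 : t != 0 by rewrite mulf_neq0 // invr_eq0.
have ct : c * t = a by rewrite /t mulrC divfK.
have dt : d * t = b.
  apply: hinj; [by apply: sqM; [apply: sqj|] | by apply: sqi |].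
  rewrite hmul //; last by apply: sqj.
  have hA : phi a = ((phi c + phi t) %% v)%N by rewrite -ct hmul //; apply: sqj.
  move: hz; rewrite zdiff_eqE //; last by apply: ltnW; apply: hlt; apply: sqj.
    2: by apply: ltnW; apply: hlt; apply: sqi.
  rewrite hA modnDml -addnA eqn_modDl => /eqP h.
  by rewrite -[phi b](@modn_small _ v) ?hlt ?sqi // -h addnC.
move: hneq => /forallP/(_ j)/forallP/(_ i)/implyP.
rewrite eq_sym ij => /(_ isT) /negP; apply; apply/existsP; exists t.
rewrite t0 /=; apply/eqP.
rewrite (three_elt ci si ai bi ab) (three_elt cj3 sj cj dj cd).
rewrite -!setUA !imsetU1 imset_set1 ct dt.
by rewrite mulNr mulrDl ct dt.
Qed.

Lemma key (F : finFieldType) (v : nat) (phi : F -> nat) n :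
  (0 < v)%N -> sq_iso v phi -> (0 < n)%N ->
  has_inequiv_rulers v phi 3 n = has_HDP v phi 3 n.
Proof.
move=> v0 hiso; case: n => [//|n] _.
apply/idP/idP.
  case/existsP => R /andP[hr hneq]; apply/existsP; exists R.
  exact: rulers_to_hdp.
case/existsP => B hB; apply/existsP; exists B.
exact: hdp_to_rulers.
Qed.

Theorem proposition4p10 (F : finFieldType) (v : nat) (phi : F -> nat) :
  #|F| = (2 * v + 1)%N -> odd v -> sq_iso v phi ->
  max_inequiv_rulers v phi 3 = max_HDP v phi 3.
Proof.
move=> _ ov hiso.
have v0 : (0 < v)%N by move: ov; case: (v).
rewrite /max_inequiv_rulers /max_HDP [LHS]big_mkcond [RHS]big_mkcond.
apply: eq_bigr => i _.
case: (posnP i) => [->|ip]; first by case: ifP; case: ifP.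
by rewrite key.
Qed.
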